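(* Let $\mathbb{Z}$ be the infinite line graph with unit weights (vertex set $\mathbb{Z}$, $x\sim y$ iff $|x-y|=1$, $\mu_x=1$, $\omega_{xy}=1$), so that $\Delta u(x)=u(x+1)+u(x-1)-2u(x)$. For every $\epsilon>0$ there exists a function $u:\mathbb{R}\times\mathbb{Z}\to\mathbb{R}$ with $u(\cdot,x)\in C^2(\mathbb{R})$ for each $x$, satisfying $\partial_t^2u(t,x)=\Delta u(t,x)$ for all $(t,x)\in\mathbb{R}\times\mathbb{Z}$, with $u(0,x)=\partial_tu(0,x)=0$ for all $x\in\mathbb{Z}$, such that $u\not\equiv0$, $u$ is not analytic in time (specifically $t\mapsto u(t,0)$ is not real analytic on $\mathbb{R}$), and for every $t\in\mathbb{R}$, $$\lim_{|x|\to\infty}|u(t,x)|\,e^{-(2+\epsilon)|x|\ln|x|}=0.$$ *)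

(* Defs.v *)
From Stdlib Require Import Reals ZArith.
From Coquelicot Require Import Coquelicot.
Open Scope R_scope.

Definition C2 (f : R -> R) : Prop :=
  (forall t, ex_derive f t) /\
  (forall t, ex_derive (Derive f) t) /\
  (forall t, continuous (Derive (Derive f)) t).

Definition real_analytic (f : R -> R) : Prop :=
  forall t0 : R, exists (a : nat -> R) (r : R), 0 < r /\
    forall t, Rabs (t - t0) < r -> is_pseries a (t - t0) (f t).

Definition lap_Z (v : Z -> R) (x : Z) : R :=
  v (x + 1)%Z + v (x - 1)%Z - 2 * v x.

(* Main.v *)
Require Import Defs.
From Stdlib Require Import Reals ZArith Lra Lia List FunctionalExtensionality.
From Coquelicot Require Import Coquelicot.
Open Scope R_scope.

Fixpoint pe (l : list R) (y : R) : R :=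
  match l with nil => 0 | a :: l' => a + y * pe l' y end.
Fixpoint padd (a b : list R) : list R :=
  match a, b with
  | nil, _ => b
  | _, nil => a
  | x :: a', z :: b' => (x + z) :: padd a' b'
  end.
Definition pscale (c : R) (l : list R) : list R := map (Rmult c) l.
Fixpoint pd (l : list R) : list R :=
  match l with nil => nil | a :: l' => padd l' (0 :: pd l') end.
Definition pT (l : list R) : list R := 0 :: 0 :: padd l (pscale (-1) (pd l)).

Lemma pe_padd a b y : pe (padd a b) y = pe a y + pe b y.
Proof.
  revert b; induction a as [|x a IH]; intros [|z b]; simpl; try ring.
  rewrite IH; ring.
Qed.

Lemma pe_pscale c l y : pe (pscale c l) y = c * pe l y.
Proof. unfold pscale; induction l as [|x l IH]; simpl; [ring|]. rewrite IH; ring. Qed.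

Lemma pe_pT l y : pe (pT l) y = y^2 * (pe l y - pe (pd l) y).
Proof. unfold pT; simpl. rewrite pe_padd, pe_pscale. ring. Qed.

Lemma is_derive_eqv (f : R -> R) x l l' : is_derive f x l -> l = l' -> is_derive f x l'.
Proof. intros H ->; exact H. Qed.

Lemma pe_der l y : is_derive (pe l) y (pe (pd l) y).
Proof.
  induction l as [|a l IH].
  - eapply is_derive_ext; [intro t; reflexivity|].
    apply (is_derive_const (V:=R_NormedModule) 0 y).
  - apply (is_derive_ext (fun t => plus a (mult t (pe l t)))); [intro t; reflexivity|].
    
    eapply is_derive_eqv.
    { apply (is_derive_plus (fun _ => a) (fun t => mult t (pe l t)) y).
      { apply is_derive_const. }
      
      apply is_derive_mult; [apply is_derive_id|exact IH|].
      intros; apply Rmult_comm. }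
    
    simpl pd. rewrite pe_padd. change (pe (0 :: pd l) y) with (0 + y * pe (pd l) y).
    change (plus (zero : R) (plus (mult (one : R) (pe l y)) (mult y (pe (pd l) y))) = pe l y + (0 + y * pe (pd l) y)).
    rewrite plus_zero_l, mult_one_l. change (pe l y + y * pe (pd l) y = pe l y + (0 + y * pe (pd l) y)). ring.
Qed.

Fixpoint Sa (l : list R) : R := match l with nil => 0 | a :: l' => Rabs a + Sa l' end.

Lemma Sa_ge0 l : 0 <= Sa l.
Proof. induction l; simpl; [lra|]. pose proof (Rabs_pos a); lra. Qed.

Lemma pe_bound l y M : Rabs y <= M -> 1 <= M -> Rabs (pe l y) <= Sa l * M ^ length l.
Proof.
  intros Hy HM. induction l as [|a l IH]; simpl.
  - rewrite Rabs_R0; lra.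
  - pose proof (Sa_ge0 l). pose proof (pow_R1_Rle M (length l) HM).
    eapply Rle_trans; [apply Rabs_triang|]. rewrite Rabs_mult.
    assert (Rabs y * Rabs (pe l y) <= M * (Sa l * M ^ length l)).
    { apply Rmult_le_compat; try apply Rabs_pos; auto. }
    assert (Rabs a <= Rabs a * (M * M ^ length l)).
    { pose proof (Rabs_pos a). rewrite <- (Rmult_1_r (Rabs a)) at 1.
      apply Rmult_le_compat_l; auto. replace 1 with (1*1) by ring. apply Rmult_le_compat; lra. }
    nra.
Qed.

Lemma exp_INR_mult k x : exp (INR k * x) = exp x ^ k.
Proof.
  induction k. { simpl; rewrite Rmult_0_l, exp_0; reflexivity. }
  rewrite S_INR, Rmult_plus_distr_r, Rmult_1_l, exp_plus, IHk. simpl. ring.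
Qed.

Lemma exp_ge_pow k y : 0 <= y -> (0 < k)%nat -> (y / INR k) ^ k <= exp y.
Proof.
  intros Hy Hk. assert (0 < INR k) by (apply lt_0_INR; auto).
  replace y with (INR k * (y / INR k)) at 2 by (field; lra).
  rewrite exp_INR_mult. apply pow_incr. split.
  - apply Rdiv_le_0_compat; lra.
  - pose proof (exp_ineq1_le (y / INR k)). assert (0 <= y / INR k) by (apply Rdiv_le_0_compat; lra). lra.
Qed.

Definition g (l : list R) (t : R) : R :=
  if Rlt_dec 0 t then pe l (/ t) * exp (- / t) else 0.

Lemma g_pos l t : 0 < t -> g l t = pe l (/ t) * exp (- / t).
Proof. intros H; unfold g; destruct (Rlt_dec 0 t); [reflexivity|lra]. Qed.

Lemma g_npos l t : t <= 0 -> g l t = 0.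
Proof. intros H; unfold g; destruct (Rlt_dec 0 t); [lra|reflexivity]. Qed.

Lemma g_small l : exists C, 0 <= C /\ forall h, 0 < h <= 1 -> Rabs (g l h) <= C * h^2.
Proof.
  set (L := length l). set (k := (L + 2)%nat).
  assert (Hk : 0 < INR k) by (apply lt_0_INR; unfold k; lia).
  exists (Sa l * INR k ^ k). pose proof (Sa_ge0 l).
  split. { apply Rmult_le_pos; auto. apply pow_le; lra. }
  intros h Hh. rewrite g_pos by lra. set (y := / h).
  assert (Hy1 : 1 <= y). { unfold y. replace 1 with (/1) by field. apply Rinv_le_contravar; lra. }
  assert (Hyh : y * h = 1) by (unfold y; field; lra).
  pose proof (exp_ge_pow k y ltac:(lra) ltac:(unfold k; lia)) as He.
  unfold Rdiv in He; rewrite Rpow_mult_distr in He.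
  assert (Hkk : 0 < INR k ^ k) by (apply pow_lt; lra).
  assert (Hyk : y ^ k = y ^ L * y ^ 2) by (unfold k; rewrite pow_add; ring).
  assert (He2 : y ^ L * y ^ 2 <= exp y * INR k ^ k).
  { rewrite <- Hyk. replace (y ^ k) with (y ^ k * (/ INR k) ^ k * INR k ^ k).
    2:{ rewrite Rmult_assoc, <- Rpow_mult_distr, Rinv_l, pow1 by lra. ring. }
    apply Rmult_le_compat_r; lra. }
  rewrite Rabs_mult, (Rabs_right (exp _)) by (left; apply exp_pos).
  pose proof (pe_bound l y y ltac:(rewrite Rabs_right; lra) Hy1) as Hb. fold L in Hb.
  rewrite exp_Ropp. pose proof (exp_pos y).
  assert (Hyl : 0 <= y ^ L) by (apply pow_le; lra).
  apply (Rmult_le_reg_r (exp y)); auto. rewrite Rmult_assoc, Rinv_l by lra. rewrite Rmult_1_r.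
  eapply Rle_trans; [exact Hb|].
  assert (h ^ 2 * y ^ 2 = 1) by (rewrite <- Rpow_mult_distr, Rmult_comm, Hyh; ring).
  assert (Sa l * y ^ L = Sa l * (y ^ L * y ^ 2) * h ^ 2) by (rewrite Rmult_assoc, (Rmult_assoc (y^L)), (Rmult_comm (y^2)), H1; ring).
  rewrite H2. replace (Sa l * INR k ^ k * h ^ 2 * exp y) with (Sa l * (exp y * INR k ^ k) * h^2) by ring.
  apply Rmult_le_compat_r; [apply pow_le; lra|]. apply Rmult_le_compat_l; auto.
Qed.


Lemma smooth_der l t : 0 < t ->
  is_derive (fun s => pe l (/ s) * exp (- / s)) t (pe (pT l) (/ t) * exp (- / t)).
Proof.
  intros Ht.
  assert (Hinv : is_derive (fun s => / s) t (- 1 / t ^ 2)).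
  { apply (is_derive_inv (fun y => y) t 1); [apply (is_derive_id (K:=R_AbsRing))|lra]. }
  pose proof (is_derive_comp (pe l) (fun s => / s) t _ _ (pe_der l (/ t)) Hinv) as Hpe.
  assert (Hm : is_derive (fun s => - / s) t (- (- 1 / t ^ 2))).
  { apply (is_derive_opp (fun s => / s) t _ Hinv). }
  pose proof (is_derive_comp exp (fun s => - / s) t _ _ (is_derive_exp (- / t)) Hm) as Hex.
  eapply is_derive_eqv.
  { apply (is_derive_mult (fun s => pe l (/ s)) (fun s => exp (- / s)) t _ _ Hpe Hex).
    intros; apply Rmult_comm. }
  rewrite pe_pT. 
  cbv [plus mult scal opp one]. simpl. cbv [mult]; simpl. field. lra.
Qed.

Lemma g_der l t : is_derive (g l) t (g (pT l) t).
Proof.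
  destruct (Rtotal_order t 0) as [Hn|[H0|Hp]].
  - rewrite g_npos by lra.
    apply (is_derive_ext_loc (fun _ => 0)).
    { apply (filter_imp (fun s => s < 0)); [intros s Hs; rewrite g_npos by lra; reflexivity|].
      apply open_lt; auto. }
    apply (is_derive_const (V:=R_NormedModule) 0 t).
  - subst t. rewrite g_npos by lra. apply is_derive_Reals.
    intros eps Heps. destruct (g_small l) as [C [HC HCb]].
    assert (Hd : 0 < Rmin 1 (eps / (C + 1))).
    { apply Rmin_pos; [lra|]. apply Rdiv_lt_0_compat; lra. }
    exists (mkposreal _ Hd). intros h Hh0 Hh. simpl in Hh.
    rewrite Rplus_0_l, (g_npos l 0) by lra.
    destruct (Rle_lt_dec h 0) as [Hn|Hp].
    + rewrite g_npos by lra. replace ((0 - 0) / h - 0) with 0 by (field; lra). rewrite Rabs_R0. lra.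
    + assert (h < 1) by (pose proof (Rmin_l 1 (eps/(C+1))); rewrite Rabs_right in Hh; lra).
      assert (h < eps / (C+1)) by (pose proof (Rmin_r 1 (eps/(C+1))); rewrite Rabs_right in Hh; lra).
      pose proof (HCb h ltac:(lra)) as Hb.
      replace ((g l h - 0) / h - 0) with (g l h / h) by (field; lra).
      unfold Rdiv. rewrite Rabs_mult, Rabs_inv, (Rabs_right h) by lra.
      apply (Rmult_lt_reg_r h); [lra|]. rewrite Rmult_assoc, Rinv_l, Rmult_1_r by lra.
      eapply Rle_lt_trans; [exact Hb|].
      assert (C * h < eps).
      { apply (Rle_lt_trans _ ((C+1) * h)); [nra|].
        apply (Rmult_lt_reg_l (/ (C+1))); [apply Rinv_0_lt_compat; lra|].
        rewrite <- Rmult_assoc, Rinv_l, Rmult_1_l by lra. rewrite Rmult_comm. exact H0. }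
      nra.
  - rewrite g_pos by lra.
    apply (is_derive_ext_loc (fun s => pe l (/ s) * exp (- / s))).
    { apply (filter_imp (fun s => 0 < s)); [intros s Hs; rewrite g_pos by lra; reflexivity|].
      apply open_gt; auto. }
    apply smooth_der; auto.
Qed.

Lemma Derive_g l : Derive (g l) = g (pT l).
Proof. apply functional_extensionality; intro t. apply is_derive_unique, g_der. Qed.

Lemma g_cont l t : continuous (g l) t.
Proof. apply (ex_derive_continuous (K:=R_AbsRing) (V:=R_NormedModule) (g l)). eexists; apply g_der. Qed.

Lemma g_C2 l : (forall t, ex_derive (g l) t) /\ (forall t, ex_derive (Derive (g l)) t) /\
  (forall t, continuous (Derive (Derive (g l))) t).
Proof.
  rewrite !Derive_g. split; [|split]; intro t; try (eexists; apply g_der). apply g_cont.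
Qed.


Definition pD (l : list R) : list R := pT (pT l).
Definition Rnext (a b : list R) : list R := padd (padd (pD b) (pscale 2 b)) (pscale (-1) a).
Definition R0l : list R := 1 :: nil.
Definition R1l : list R := pscale (/ 2) (padd (pD R0l) (pscale 2 R0l)).
Fixpoint Rp (n : nat) : list R * list R :=
  match n with O => (R0l, R1l) | S n => (snd (Rp n), Rnext (fst (Rp n)) (snd (Rp n))) end.
Definition Rn (n : nat) : list R := fst (Rp n).

Lemma Rn_SS n : Rn (S (S n)) = Rnext (Rn n) (Rn (S n)).
Proof. reflexivity. Qed.

Lemma g_padd a b t : g (padd a b) t = g a t + g b t.
Proof. destruct (Rlt_dec 0 t). rewrite !g_pos by lra. rewrite pe_padd; ring. rewrite !g_npos by lra; ring. Qed.
Lemma g_pscale c a t : g (pscale c a) t = c * g a t.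
Proof. destruct (Rlt_dec 0 t). rewrite !g_pos by lra. rewrite pe_pscale; ring. rewrite !g_npos by lra; ring. Qed.

Definition u (t : R) (x : Z) : R := g (Rn (Z.abs_nat x)) t.

Lemma DD_u x t : Derive (Derive (fun s => u s x)) t = g (pD (Rn (Z.abs_nat x))) t.
Proof. unfold u. change (fun s => g (Rn (Z.abs_nat x)) s) with (g (Rn (Z.abs_nat x))). rewrite !Derive_g. reflexivity. Qed.

Lemma wave x t : Derive (Derive (fun s => u s x)) t = lap_Z (u t) x.
Proof.
  rewrite DD_u. unfold lap_Z, u.
  destruct (Z_lt_le_dec 0 x) as [Hp|Hn].
  - destruct (Z.abs_nat x) as [|m] eqn:E; [lia|].
    replace (Z.abs_nat (x + 1)) with (S (S m)) by lia.
    replace (Z.abs_nat (x - 1)) with m by lia.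
    rewrite Rn_SS. unfold Rnext. rewrite !g_padd, !g_pscale. ring.
  - destruct (Z.eq_dec x 0) as [->|Hne].
    + replace (Z.abs_nat (0+1)) with 1%nat by reflexivity. replace (Z.abs_nat (0-1)) with 1%nat by reflexivity.
      replace (Z.abs_nat 0) with 0%nat by reflexivity. change (Rn 1) with R1l. change (Rn 0) with R0l. unfold R1l.
      rewrite !g_pscale, !g_padd, !g_pscale. field.
    + destruct (Z.abs_nat x) as [|m] eqn:E; [lia|].
      replace (Z.abs_nat (x - 1)) with (S (S m)) by lia.
      replace (Z.abs_nat (x + 1)) with m by lia.
      rewrite Rn_SS. unfold Rnext. rewrite !g_padd, !g_pscale. ring.
Qed.


Lemma len_padd a b : length (padd a b) = Nat.max (length a) (length b).
Proof. revert b; induction a; intros [|z b]; simpl; auto. Qed.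
Lemma Sa_padd a b : Sa (padd a b) <= Sa a + Sa b.
Proof. revert b; induction a; intros [|z b]; simpl; try lra.
  pose proof (Rabs_triang a z). pose proof (IHa b). lra. Qed.
Lemma len_pscale c a : length (pscale c a) = length a.
Proof. apply length_map. Qed.
Lemma Sa_pscale c a : Sa (pscale c a) = Rabs c * Sa a.
Proof. unfold pscale; induction a; simpl; [ring|]. rewrite IHa, Rabs_mult; ring. Qed.
Lemma len_pd l : (length (pd l) <= length l)%nat.
Proof. induction l; simpl; auto. rewrite len_padd. simpl. lia. Qed.
Lemma Sa_pd l : Sa (pd l) <= INR (length l) * Sa l.
Proof.
  induction l. { simpl; lra. }
  change (pd (a::l)) with (padd l (0::pd l)). change (Sa (a::l)) with (Rabs a + Sa l).
  change (length (a::l)) with (S (length l)). rewrite S_INR.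
  pose proof (Sa_padd l (0 :: pd l)). simpl in H. rewrite Rabs_R0 in H.
  pose proof (Sa_ge0 l). pose proof (Rabs_pos a). pose proof (pos_INR (length l)).
  nra.
Qed.
Lemma len_pT l : (length (pT l) <= length l + 2)%nat.
Proof. unfold pT. simpl. rewrite len_padd, len_pscale. pose proof (len_pd l). lia. Qed.
Lemma Sa_pT l : Sa (pT l) <= (1 + INR (length l)) * Sa l.
Proof.
  unfold pT. simpl. rewrite Rabs_R0. pose proof (Sa_padd l (pscale (-1) (pd l))).
  rewrite Sa_pscale in H. replace (Rabs (-1)) with 1 in H by (rewrite Rabs_left; lra). pose proof (Sa_pd l). lra.
Qed.
Lemma len_pD l : (length (pD l) <= length l + 4)%nat.
Proof. unfold pD. pose proof (len_pT l). pose proof (len_pT (pT l)). lia. Qed.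
Lemma Sa_pD l : Sa (pD l) <= (3 + INR (length l)) ^ 2 * Sa l.
Proof.
  unfold pD. pose proof (Sa_pT (pT l)). pose proof (Sa_pT l).
  pose proof (le_INR _ _ (len_pT l)). rewrite plus_INR in H1. replace (INR 2) with 2 in H1 by (simpl; lra).
  pose proof (Sa_ge0 l). pose proof (Sa_ge0 (pT l)). pose proof (pos_INR (length l)).
  pose proof (pos_INR (length (pT l))).
  apply (Rle_trans _ _ _ H). 
  apply (Rle_trans _ ((3 + INR (length l)) * Sa (pT l))). { apply Rmult_le_compat_r; lra. }
  replace ((3 + INR (length l))^2 * Sa l) with ((3+INR(length l)) * ((3 + INR (length l)) * Sa l)) by ring.
  apply Rmult_le_compat_l; [lra|]. nra.
Qed.

Definition F (n : nat) : R := 19 ^ n * INR (fact n) ^ 2.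
Lemma F_pos n : 0 < F n.
Proof. unfold F. apply Rmult_lt_0_compat; apply pow_lt; [lra|]. apply lt_0_INR, lt_O_fact. Qed.
Lemma F_S n : F (S n) = 19 * (INR n + 1) ^ 2 * F n.
Proof. unfold F. rewrite fact_simpl, mult_INR, S_INR. simpl. ring. Qed.
Lemma F_le n : F n <= F (S n).
Proof. rewrite F_S. pose proof (F_pos n). pose proof (pos_INR n). nra. Qed.

Lemma Rn_bound n : ((length (Rn n) <= 4 * n + 1)%nat /\ Sa (Rn n) <= F n) /\
                   ((length (Rn (S n)) <= 4 * S n + 1)%nat /\ Sa (Rn (S n)) <= F (S n)).
Proof.
  induction n.
  - change (Rn 0) with R0l. change (Rn 1) with R1l. unfold R1l, R0l.
    split; split.
    + simpl; lia.
    + unfold F; simpl; rewrite Rabs_R1; lra.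
    + rewrite len_pscale, len_padd, len_pscale. pose proof (len_pD (1::nil)). simpl in *. lia.
    + rewrite Sa_pscale. pose proof (Sa_padd (pD (1 :: nil)) (pscale 2 (1 :: nil))).
      rewrite Sa_pscale in H. pose proof (Sa_pD (1::nil)). simpl in H0, H. rewrite Rabs_R1 in *.
      rewrite (Rabs_right 2) in H by lra. rewrite Rabs_right by lra. unfold F; simpl. lra.
  - destruct IHn as [[La Sa'] [Lb Sb]]. split; [split; auto|].
    rewrite Rn_SS. unfold Rnext. split.
    + rewrite !len_padd, !len_pscale. pose proof (len_pD (Rn (S n))). lia.
    + eapply Rle_trans; [apply Sa_padd|]. rewrite Sa_pscale.
      pose proof (Sa_padd (pD (Rn (S n))) (pscale 2 (Rn (S n)))). rewrite Sa_pscale in H.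
      pose proof (Sa_pD (Rn (S n))). replace (Rabs (-1)) with 1 by (rewrite Rabs_left; lra). rewrite (Rabs_right 2) in H by lra.
      pose proof (le_INR _ _ Lb). rewrite plus_INR, mult_INR in H1. replace (INR 4) with 4 in H1 by (simpl; lra). rewrite S_INR, INR_1 in H1.
      pose proof (pos_INR (length (Rn (S n)))). pose proof (pos_INR n).
      pose proof (Sa_ge0 (Rn (S n))). pose proof (F_le n).
      rewrite F_S, S_INR. set (X := F (S n)) in *.
      assert ((3 + INR (length (Rn (S n))))^2 <= 16 * (INR n + 1 + 1)^2).
      { replace (16 * (INR n + 1 + 1)^2) with ((4 * (INR n + 1 + 1))^2) by ring. apply pow_incr. lra. }
      assert ((3 + INR (length (Rn (S n))))^2 * Sa (Rn (S n)) <= 16 * (INR n + 1 + 1)^2 * X).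
      { apply Rmult_le_compat; try nra. }
      assert (1 <= (INR n + 1 + 1)^2) by nra.
      assert (0 <= X) by (unfold X; left; apply F_pos).
      nra.
Qed.


Lemma fact_le n : INR (fact n) <= INR n ^ n.
Proof.
  induction n. { simpl; lra. }
  rewrite fact_simpl, mult_INR. change (INR (S n) ^ S n) with (INR (S n) * INR (S n) ^ n).
  apply Rmult_le_compat_l; [apply pos_INR|].
  eapply Rle_trans; [exact IHn|]. apply pow_incr. split; [apply pos_INR|]. apply le_INR; lia.
Qed.

Lemma u_bound t x : 0 < t ->
  Rabs (u t x) <= Rmax 1 (/ t) * (19 * Rmax 1 (/ t) ^ 4) ^ (Z.abs_nat x) * INR (Z.abs_nat x) ^ (2 * Z.abs_nat x).
Proof.
  intros Ht. unfold u. set (n := Z.abs_nat x). set (M := Rmax 1 (/ t)).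
  assert (HM : 1 <= M) by apply Rmax_l.
  rewrite g_pos by lra. rewrite Rabs_mult, (Rabs_right (exp _)) by (left; apply exp_pos).
  assert (exp (- / t) <= 1).
  { rewrite <- exp_0. left; apply exp_increasing. pose proof (Rinv_0_lt_compat t Ht). lra. }
  destruct (Rn_bound n) as [[Ln Sn] _].
  pose proof (pe_bound (Rn n) (/ t) M) as Hb.
  assert (Rabs (/ t) <= M) by (rewrite Rabs_right; [apply Rmax_r| left; apply Rinv_0_lt_compat; lra]).
  specialize (Hb H0 HM).
  pose proof (Rabs_pos (pe (Rn n) (/ t))).
  apply (Rle_trans _ (Rabs (pe (Rn n) (/ t)))). { pose proof (exp_pos (-/t)). nra. }
  eapply Rle_trans; [exact Hb|].
  assert (M ^ length (Rn n) <= M ^ (4 * n + 1)) by (apply Rle_pow; auto).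
  assert (F n <= 19 ^ n * INR n ^ (2 * n)).
  { unfold F. apply Rmult_le_compat_l; [apply pow_le; lra|]. 
    replace (INR n ^ (2 * n)) with ((INR n ^ n) ^ 2) by (rewrite <- pow_mult, Nat.mul_comm; reflexivity).
    apply pow_incr. split; [apply pos_INR|apply fact_le]. }
  pose proof (Sa_ge0 (Rn n)).
  assert (0 <= M ^ length (Rn n)) by (apply pow_le; lra).
  apply (Rle_trans _ (F n * M ^ (4 * n + 1))). { apply Rmult_le_compat; auto. }
  replace (M * (19 * M ^ 4) ^ n * INR n ^ (2 * n)) with (19 ^ n * INR n ^ (2 * n) * M ^ (4 * n + 1)).
  2:{ rewrite Rpow_mult_distr, pow_add, (pow_mult M 4 n). ring. }
  apply Rmult_le_compat_r; [apply pow_le; lra| auto].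
Qed.

Lemma decay eps : 0 < eps -> forall t eta, 0 < eta -> exists N : nat, forall x : Z,
  (Z.of_nat N < Z.abs x)%Z ->
  Rabs (u t x) * exp (- (2 + eps) * IZR (Z.abs x) * ln (IZR (Z.abs x))) < eta.
Proof.
  intros Heps t eta Heta.
  destruct (Rle_lt_dec t 0) as [Htn|Ht].
  { exists O. intros x _. unfold u. rewrite g_npos by lra. rewrite Rabs_R0, Rmult_0_l. lra. }
  set (M := Rmax 1 (/ t)). assert (HM : 1 <= M) by apply Rmax_l.
  set (C := 19 * M ^ 4). assert (HC : 1 <= C).
  { unfold C. pose proof (pow_R1_Rle M 4 HM). lra. }
  set (K := (ln C + 1) / eps).
  destruct (INR_unbounded (exp K)) as [N1 HN1].
  destruct (INR_unbounded (M / eta)) as [N2 HN2].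
  exists (N1 + N2)%nat. intros x Hx.
  pose proof (u_bound t x Ht) as Hb. fold M C in Hb.
  rewrite <- Nat2Z.inj_abs_nat, <- INR_IZR_INZ.
  set (n := Z.abs_nat x) in *.
  assert (Hn : (N1 + N2 < n)%nat) by (unfold n; lia).
  assert (Hn1 : exp K < INR n) by (apply (Rlt_le_trans _ (INR N1)); [lra|apply le_INR; lia]).
  assert (Hn2 : M / eta < INR n) by (apply (Rlt_le_trans _ (INR N2)); [lra|apply le_INR; lia]).
  assert (Hnpos : 0 < INR n) by (pose proof (exp_pos K); lra).
  assert (HlnK : K < ln (INR n)) by (rewrite <- (ln_exp K); apply ln_increasing; auto; apply exp_pos).
  set (E := exp (- (2 + eps) * INR n * ln (INR n))).
  assert (HE : 0 < E) by apply exp_pos.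
  assert (HCn : C ^ n = exp (INR n * ln C)).
  { rewrite <- ln_pow by lra. rewrite exp_ln; auto. apply pow_lt; lra. }
  assert (Hnn : INR n ^ (2 * n) = exp (INR (2 * n) * ln (INR n))).
  { rewrite <- ln_pow by lra. rewrite exp_ln; auto. apply pow_lt; lra. }
  apply (Rle_lt_trans _ (M * C ^ n * INR n ^ (2 * n) * E)).
  { apply Rmult_le_compat_r; lra. }
  rewrite HCn, Hnn. unfold E. rewrite Rmult_assoc, Rmult_assoc, <- !exp_plus.
  rewrite mult_INR. replace (INR 2) with 2 by (simpl; lra).
  set (z := INR n * ln C + (2 * INR n * ln (INR n) + - (2 + eps) * INR n * ln (INR n))).
  assert (Hz : z <= - INR n).
  { unfold z. assert (eps * K = ln C + 1) by (unfold K; field; lra).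
    assert (eps * K < eps * ln (INR n)) by (apply Rmult_lt_compat_l; lra).
    nra. }
  apply (Rle_lt_trans _ (M * exp (- INR n))).
  { apply Rmult_le_compat_l; [lra|]. destruct (Req_dec z (- INR n)) as [->|]; [lra|].
    left; apply exp_increasing; lra. }
  rewrite exp_Ropp. pose proof (exp_ineq1_le (INR n)). pose proof (exp_pos (INR n)).
  apply (Rmult_lt_reg_r (exp (INR n))); auto. rewrite Rmult_assoc, Rinv_l, Rmult_1_r by lra.
  assert (M < eta * INR n).
  { apply (Rmult_lt_reg_r (/ eta)); [apply Rinv_0_lt_compat; lra|].
    replace (eta * INR n * / eta) with (INR n) by (field; lra). exact Hn2. }
  nra.
Qed.


Lemma Derive_n_g n l x : Derive_n (g l) n x = g (Nat.iter n pT l) x.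
Proof.
  revert x; induction n; intro x; [reflexivity|].
  simpl Derive_n. rewrite (functional_extensionality _ _ IHn). rewrite Derive_g. reflexivity.
Qed.

Lemma lim0_bounded (w : nat -> R) : is_lim_seq w 0 -> exists M, forall n, Rabs (w n) <= M.
Proof.
  intros H. apply is_lim_seq_spec in H. destruct (H (mkposreal 1 Rlt_0_1)) as [N HN]. simpl in HN.
  set (sa := fix sa k := match k with O => 0 | S k => sa k + Rabs (w k) end).
  assert (Hpos : forall k, 0 <= sa k).
  { induction k; simpl; [lra|]. pose proof (Rabs_pos (w k)); lra. }
  assert (Hle : forall k m, (m < k)%nat -> Rabs (w m) <= sa k).
  { induction k; intros m Hm; [lia|]. simpl. destruct (Nat.eq_dec m k) as [->|].
    - pose proof (Hpos k); lra.
    - pose proof (IHk m ltac:(lia)). pose proof (Rabs_pos (w k)); lra. }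
  exists (1 + sa N). intro n. destruct (le_lt_dec N n) as [Hn|Hn].
  - specialize (HN n Hn). rewrite Rminus_0_r in HN. pose proof (Hpos N); lra.
  - pose proof (Hle N n Hn); lra.
Qed.

Lemma not_analytic : ~ real_analytic (g R0l).
Proof.
  intros H. destruct (H 0) as [a [r [Hr Ha]]].
  assert (Hr2 : Rabs (r / 2 - 0) < r) by (rewrite Rminus_0_r, Rabs_right; lra).
  pose proof (Ha _ Hr2) as Hs. rewrite Rminus_0_r in Hs.
  assert (Hrad : Rbar_lt 0 (CV_radius a)).
  { assert (Hex : ex_series (fun k => scal (pow_n (r/2) k) (a k))) by (eexists; exact Hs).
    apply ex_series_lim_0 in Hex. apply lim0_bounded in Hex. destruct Hex as [M HM].
    destruct (CV_radius_bounded a) as [Hub _].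
    assert (Hl : Rbar_le (r / 2) (CV_radius a)).
    { apply Hub. exists M. intro n. specialize (HM n). rewrite pow_n_pow in HM.
      change (scal (r / 2 ^ n) (a n)) with ((r/2)^n * a n) in HM. rewrite Rmult_comm; exact HM. }
    destruct (CV_radius a) as [c| |]; simpl in *; lra. }
  assert (Hloc : locally 0 (fun t => PSeries a t = g R0l t)).
  { apply (filter_imp (fun t => -r < t /\ t < r)).
    - intros t [H1 H2]. apply is_pseries_unique. replace t with (t - 0) at 1 by ring.
      apply Ha. rewrite Rminus_0_r. apply Rabs_def1; lra.
    - apply filter_and; [apply open_gt|apply open_lt]; lra. }
  assert (Hz : forall n, a n = 0).
  { intro n. pose proof (Derive_n_coef a n Hrad) as Hc.
    rewrite (Derive_n_ext_loc _ _ n 0 Hloc), Derive_n_g, g_npos in Hc by lra.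
    pose proof (INR_fact_neq_0 n). symmetry in Hc. apply Rmult_integral in Hc. destruct Hc; auto. contradiction. }
  apply is_pseries_unique in Hs. rewrite (PSeries_ext _ (fun _ => 0)) in Hs by auto.
  rewrite PSeries_const_0, g_pos in Hs by lra. simpl in Hs.
  pose proof (exp_pos (- / (r / 2))). lra.
Qed.

Theorem theorem3p1 : forall eps : R, 0 < eps ->
  exists u : R -> Z -> R,
    (forall x : Z, C2 (fun t => u t x)) /\
    (forall (t : R) (x : Z),
       Derive (Derive (fun s => u s x)) t = lap_Z (u t) x) /\
    (forall x : Z, u 0 x = 0 /\ Derive (fun s => u s x) 0 = 0) /\
    (exists (t : R) (x : Z), u t x <> 0) /\
    ~ real_analytic (fun t => u t 0%Z) /\
    (forall t : R, forall eta : R, 0 < eta -> exists N : nat,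
       forall x : Z, (Z.of_nat N < Z.abs x)%Z ->
         Rabs (u t x) * exp (- (2 + eps) * IZR (Z.abs x) * ln (IZR (Z.abs x))) < eta).
Proof.
  intros eps Heps. exists u. split; [|split; [|split; [|split; [|split]]]].
  - intro x. unfold C2, u. apply g_C2.
  - intros t x; apply wave.
  - intro x. unfold u. split; [apply g_npos; lra|].
    change (fun s => g (Rn (Z.abs_nat x)) s) with (g (Rn (Z.abs_nat x))).
    rewrite Derive_g. apply g_npos; lra.
  - exists 1, 0%Z. unfold u. simpl Z.abs_nat. change (Rn 0) with R0l.
    rewrite g_pos by lra. unfold R0l; simpl. pose proof (exp_pos (- / 1)). nra.
  - exact not_analytic.
  - intros t eta Heta. apply (decay eps Heps t eta Heta).
Qed.
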